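(* Let $(G,M,\Delta)$ be a Garside structure and $(H,N,\delta)$ a parabolic substructure. Put $\omega=\delta^{-1}\Delta$ and $\Phi(\alpha)=\Delta\alpha\Delta^{-1}$. Let $k\ge0$ be an integer and let $a\in M$ be of the form $a=\omega_1\omega_2\cdots\omega_k c$, where $\omega_i=\Phi^{-i+1}(\omega)$ for $i\in\{1,\dots,k\}$, $c\in M$, $\Phi^{-k}(\omega)\not\le_L c$, and $c$ is $\Phi^{-k}(N)$-reduced. Then $\lg(a)=\lg(c)+k$.
   Context: Let $G$ be a group and $M$ a submonoid with $M\cap M^{-1}=\{1\}$. Define $\alpha\le_L\beta$ iff $\alpha^{-1}\beta\in M$, and $\alpha\le_R\beta$ iff $\beta\alpha^{-1}\in M$. For $a\in M$ let $\mathrm{Div}_L(a)=\{b\in M: b\le_L a\}$, $\mathrm{Div}_R(a)=\{b\in M: b\le_R a\}$; $a$ is balanced if these coincide, and then $\mathrm{Div}(a)$ denotes this set. $M$ is Noetherian if each $a\in M$ admits an $n$ such that $a$ is not a product of more than $n$ non-trivial factors. A Garside structure $(G,M,\Delta)$: $\Delta\in M$ balanced, $M$ Noetherian, $\mathrm{Div}(\Delta)$ finite and generating $M$ as a monoid and $G$ as a group, $(G,\le_L)$ a lattice with meet $\wedge_L$. A parabolic substructure $(H,N,\delta)$: $\delta\in M$ balanced, $H$ (resp. $N$) the subgroup (resp. submonoid) generated by $\mathrm{Div}(\delta)$, and $\mathrm{Div}(\delta)=\mathrm{Div}(\Delta)\cap N$; it is assumed $H\ne\{1\}$. $\lg$ is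 word length on $G$ with respect to $\mathcal S=\mathrm{Div}(\Delta)\setminus\{1\}$. For $j\in\mathbb Z$, an element $c\in M$ is $\Phi^{j}(N)$-reduced if the only $b\in\Phi^{j}(N)$ with $b\le_L c$ is $b=1$ (equivalently $c\wedge_L\Phi^{j}(\delta)=1$). *)

(* Defs.v *)
From Stdlib Require Import List ZArith ClassicalEpsilon.
Import ListNotations.

Set Implicit Arguments.

Record Group := {
  carrier :> Type;
  gmul : carrier -> carrier -> carrier;
  ginv : carrier -> carrier;
  gone : carrier;
  gmulA : forall x y z, gmul x (gmul y z) = gmul (gmul x y) z;
  gmul1l : forall x, gmul gone x = x;
  gmul1r : forall x, gmul x gone = x;
  gmulVl : forall x, gmul (ginv x) x = gone;
  gmulVr : forall x, gmul x (ginv x) = gone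
}.

Arguments gmul {g} _ _.
Arguments ginv {g} _.
Arguments gone {g}.

Section Garside.
Context {G : Group}.

Fixpoint lprod (l : list G) : G :=
  match l with
  | [] => gone
  | x :: l' => gmul x (lprod l')
  end.

Fixpoint gpow (x : G) (n : nat) : G :=
  match n with
  | O => gone
  | S n' => gmul x (gpow x n')
  end.

Definition zpow (x : G) (z : Z) : G :=
  match z with
  | Z0 => gone
  | Zpos p => gpow x (Pos.to_nat p)
  | Zneg p => ginv (gpow x (Pos.to_nat p))
  end.

Variable M : G -> Prop.

Definition leL (a b : G) : Prop := M (gmul (ginv a) b).
Definition leR (a b : G) : Prop := M (gmul b (ginv a)).

Definition DivL (a b : G) : Prop := M b /\ leL b a.
Definition DivR (a b : G) : Prop := M b /\ leR b a.

Definition balanced (a : G) : Prop := forall b, DivL a b <-> DivR a b.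

(** Div(a) (meaningful when a is balanced) *)
Definition Div (a : G) : G -> Prop := DivL a.

Definition submonoid : Prop :=
  M gone /\ forall x y, M x -> M y -> M (gmul x y).

Definition pointed : Prop := forall x, M x -> M (ginv x) -> x = gone.

Definition noetherian : Prop :=
  forall a, M a -> exists n : nat, forall l : list G,
    (forall x, In x l -> M x /\ x <> gone) -> lprod l = a -> length l <= n.

Definition finite_pred (P : G -> Prop) : Prop :=
  exists l : list G, forall x, P x <-> In x l.

Definition gen_monoid (P : G -> Prop) (x : G) : Prop :=
  exists l : list G, (forall y, In y l -> P y) /\ lprod l = x.

Definition gen_group (P : G -> Prop) (x : G) : Prop :=
  exists l : list G, (forall y, In y l -> P y \/ P (ginv y)) /\ lprod l = x.

Definition is_meetL (a b m : G) : Prop :=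
  leL m a /\ leL m b /\ forall x, leL x a -> leL x b -> leL x m.
Definition is_joinL (a b j : G) : Prop :=
  leL a j /\ leL b j /\ forall x, leL a x -> leL b x -> leL j x.

Definition lattice_L : Prop :=
  forall a b, (exists m, is_meetL a b m) /\ (exists j, is_joinL a b j).

Definition GarsideStructure (Delta : G) : Prop :=
  submonoid /\ pointed /\
  M Delta /\ balanced Delta /\ noetherian /\
  finite_pred (Div Delta) /\
  (forall x, M x <-> gen_monoid (Div Delta) x) /\
  (forall x : G, gen_group (Div Delta) x) /\
  lattice_L.

Definition Nsub (delta : G) : G -> Prop := gen_monoid (Div delta).
Definition Hsub (delta : G) : G -> Prop := gen_group (Div delta).

Definition ParabolicSub (Delta delta : G) : Prop :=
  M delta /\ balanced delta /\
  (forall x, Div delta x <-> (Div Delta x /\ Nsub delta x)) /\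
  (exists h, Hsub delta h /\ h <> gone).

Definition PhiZ (Delta : G) (j : Z) (x : G) : G :=
  gmul (zpow Delta j) (gmul x (ginv (zpow Delta j))).

Definition reduced (Delta delta : G) (j : Z) (c : G) : Prop :=
  forall b, (exists n, Nsub delta n /\ b = PhiZ Delta j n) -> leL b c -> b = gone.

Definition Sgen (Delta : G) (x : G) : Prop := Div Delta x /\ x <> gone.

Definition word_of_len (Delta : G) (g : G) (n : nat) : Prop :=
  exists l : list G, (forall y, In y l -> Sgen Delta y \/ Sgen Delta (ginv y))
    /\ lprod l = g /\ length l = n.

Definition is_lg (Delta : G) (g : G) (n : nat) : Prop :=
  word_of_len Delta g n /\ forall m, word_of_len Delta g m -> n <= m.

Definition lg (Delta : G) (g : G) : nat :=
  epsilon (inhabits 0%nat) (fun n => is_lg Delta g n).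

Fixpoint omega_prod (Delta omega : G) (k : nat) : G :=
  match k with
  | O => gone
  | S i => gmul (omega_prod Delta omega i) (PhiZ Delta (- Z.of_nat i) omega)
  end.

End Garside.

(* Main.v *)
Require Import Defs.
From Stdlib Require Import ZArith List Lia Classical ClassicalEpsilon.
Import ListNotations.

Section Aux.
Variable G : Group.
Local Notation "x ** y" := (@gmul G x y) (at level 40, left associativity).

Lemma gmulA' (x y z : G) : (x ** y) ** z = x ** (y ** z).
Proof. now rewrite gmulA. Qed.
Lemma canc1 (x y : G) : ginv x ** (x ** y) = y.
Proof. rewrite gmulA, gmulVl, gmul1l; reflexivity. Qed.
Lemma canc2 (x y : G) : x ** (ginv x ** y) = y.
Proof. rewrite gmulA, gmulVr, gmul1l; reflexivity. Qed.
Lemma inv_uniq (x y : G) : x ** y = gone -> ginv x = y.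
Proof. intro H. rewrite <- (gmul1r _ (ginv x)), <- H, canc1. reflexivity. Qed.
Lemma ginv_ginv (x : G) : ginv (ginv x) = x.
Proof. apply inv_uniq, gmulVl. Qed.
Lemma ginv_one : ginv (@gone G) = gone.
Proof. apply inv_uniq, gmul1l. Qed.
Lemma ginv_mul (x y : G) : ginv (x ** y) = ginv y ** ginv x.
Proof. apply inv_uniq. rewrite gmulA', canc2, gmulVr. reflexivity. Qed.
Lemma gpow_comm (x : G) n : x ** gpow x n = gpow x n ** x.
Proof. induction n; simpl. rewrite gmul1l, gmul1r; reflexivity.
  rewrite <- gmulA, <- IHn; reflexivity. Qed.
End Aux.

Ltac gsimpl := repeat (rewrite ?ginv_mul, ?ginv_ginv, ?ginv_one, ?gmulA', ?gmul1l, ?gmul1r, ?gmulVl, ?gmulVr, ?canc1, ?canc2).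


Section Main.
Variable G : Group.
Variable M : G -> Prop.
Variables Delta delta : G.
Hypothesis HG : GarsideStructure M Delta.
Hypothesis HP : ParabolicSub M Delta delta.
Local Notation "x ** y" := (@gmul G x y) (at level 40, left associativity).

Definition simple (x : G) : Prop := Div M Delta x.
Lemma simple_iff x : simple x <-> M x /\ M (ginv x ** Delta).
Proof. unfold simple, Div, DivL, leL. tauto. Qed.

Lemma M1 : M gone. Proof. destruct HG as [[H _] _]. exact H. Qed.
Lemma Mmul x y : M x -> M y -> M (x ** y).
Proof. destruct HG as [[_ H] _]. apply H. Qed.
Lemma Mpt x : M x -> M (ginv x) -> x = gone.
Proof. destruct HG as [_ [H _]]. apply H. Qed.
Lemma MD : M Delta. Proof. destruct HG as [_ [_ [H _]]]. exact H. Qed.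
Lemma bal : balanced M Delta. Proof. destruct HG as [_ [_ [_ [H _]]]]. exact H. Qed.
Lemma Mgen x : M x <-> gen_monoid (Div M Delta) x.
Proof. destruct HG as [_ [_ [_ [_ [_ [_ [H _]]]]]]]. apply H. Qed.
Lemma Ggen x : gen_group (Div M Delta) x.
Proof. destruct HG as [_ [_ [_ [_ [_ [_ [_ [H _]]]]]]]]. apply H. Qed.
Lemma lat : lattice_L M.
Proof. destruct HG as [_ [_ [_ [_ [_ [_ [_ [_ H]]]]]]]]. exact H. Qed.

Lemma leL_refl x : leL M x x.
Proof. unfold leL. rewrite gmulVl. apply M1. Qed.
Lemma leL_trans x y z : leL M x y -> leL M y z -> leL M x z.
Proof. unfold leL. intros H1 H2. 
  replace (ginv x ** z) with ((ginv x ** y) ** (ginv y ** z)) by (gsimpl; reflexivity).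
  apply Mmul; auto. Qed.
Lemma leL_antisym x y : leL M x y -> leL M y x -> x = y.
Proof. unfold leL. intros H1 H2.
  assert (E : ginv x ** y = gone).
  { apply Mpt; auto. rewrite ginv_mul, ginv_ginv. exact H2. }
  rewrite <- (canc2 _ x y), E, gmul1r. reflexivity. Qed.
Lemma leL_one x : leL M gone x <-> M x.
Proof. unfold leL. rewrite ginv_one, gmul1l. tauto. Qed.
Lemma leL_mul x y z : leL M y z -> leL M (x ** y) (x ** z).
Proof. unfold leL. gsimpl. auto. Qed.

Definition phi x := Delta ** (x ** ginv Delta).
Definition phi' x := ginv Delta ** (x ** Delta).

Lemma phi_phi' x : phi (phi' x) = x. Proof. unfold phi, phi'. gsimpl. reflexivity. Qed.
Lemma phi'_phi x : phi' (phi x) = x. Proof. unfold phi, phi'. gsimpl. reflexivity. Qed.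
Lemma phi_mul x y : phi (x ** y) = phi x ** phi y. Proof. unfold phi. gsimpl. reflexivity. Qed.
Lemma phi'_mul x y : phi' (x ** y) = phi' x ** phi' y. Proof. unfold phi'. gsimpl. reflexivity. Qed.
Lemma phi_inv x : phi (ginv x) = ginv (phi x). Proof. unfold phi. gsimpl. reflexivity. Qed.
Lemma phi'_inv x : phi' (ginv x) = ginv (phi' x). Proof. unfold phi'. gsimpl. reflexivity. Qed.
Lemma phi_one : phi gone = gone. Proof. unfold phi. gsimpl. reflexivity. Qed.
Lemma phi'_one : phi' gone = gone. Proof. unfold phi'. gsimpl. reflexivity. Qed.
Lemma phi_D : phi Delta = Delta. Proof. unfold phi. gsimpl. reflexivity. Qed.
Lemma phi'_D : phi' Delta = Delta. Proof. unfold phi'. gsimpl. reflexivity. Qed.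

Lemma simple_phi'_M s : simple s -> M (phi' s).
Proof. intros Hs. pose proof Hs as [Ms Hs2]. unfold leL in Hs2.
  assert (Hr : DivR M Delta (ginv s ** Delta)).
  { split; auto. unfold leR. gsimpl. exact Ms. }
  apply bal in Hr. destruct Hr as [_ Hr]. unfold leL in Hr. unfold phi'.
  revert Hr. gsimpl. auto. Qed.
Lemma simple_phi_M s : simple s -> M (phi s).
Proof. intros Hs. apply bal in Hs. destruct Hs as [Ms Hs2]. unfold leR in Hs2.
  assert (Hr : DivL M Delta (Delta ** ginv s)).
  { split; auto. unfold leL. gsimpl. exact Ms. }
  apply bal in Hr. destruct Hr as [_ Hr]. unfold leR in Hr. unfold phi.
  revert Hr. gsimpl. auto. Qed.

Lemma M_lprod_map (f : G -> G) : (forall x y, f (x ** y) = f x ** f y) -> f gone = gone ->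
  (forall s, simple s -> M (f s)) -> forall x, M x -> M (f x).
Proof. intros Hm H1 Hs x Hx. apply Mgen in Hx. destruct Hx as [l [Hl E]]. subst x.
  induction l as [|y l IH]; simpl. rewrite H1; apply M1.
  rewrite Hm. apply Mmul. apply Hs, Hl; simpl; auto. apply IH. intros; apply Hl; simpl; auto. Qed.

Lemma M_phi x : M x -> M (phi x).
Proof. apply M_lprod_map. apply phi_mul. apply phi_one. apply simple_phi_M. Qed.
Lemma M_phi' x : M x -> M (phi' x).
Proof. apply M_lprod_map. apply phi'_mul. apply phi'_one. apply simple_phi'_M. Qed.

Lemma leL_phi x y : leL M x y -> leL M (phi x) (phi y).
Proof. unfold leL. intro H. rewrite <- phi_inv, <- phi_mul. apply M_phi, H. Qed.
Lemma leL_phi' x y : leL M x y -> leL M (phi' x) (phi' y).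
Proof. unfold leL. intro H. rewrite <- phi'_inv, <- phi'_mul. apply M_phi', H. Qed.

Lemma simple_phi s : simple s -> simple (phi s).
Proof. rewrite !simple_iff. intros [H1 H2]. split. apply M_phi, H1.
  rewrite <- phi_D. rewrite <- phi_inv, <- phi_mul. apply M_phi, H2. Qed.
Lemma simple_phi' s : simple s -> simple (phi' s).
Proof. rewrite !simple_iff. intros [H1 H2]. split. apply M_phi', H1.
  rewrite <- phi'_D. rewrite <- phi'_inv, <- phi'_mul. apply M_phi', H2. Qed.


Definition conjn n x := ginv (gpow Delta n) ** (x ** gpow Delta n).
Definition conjp n x := gpow Delta n ** (x ** ginv (gpow Delta n)).

Lemma Mpow n : M (gpow Delta n).
Proof. induction n; simpl. apply M1. apply Mmul; auto. apply MD. Qed.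
Lemma M_conjn n x : M x -> M (conjn n x).
Proof. revert x; induction n; intros x Hx; unfold conjn; simpl.
  gsimpl. exact Hx.
  replace (ginv (Delta ** gpow Delta n) ** (x ** (Delta ** gpow Delta n))) with (conjn n (phi' x))
   by (unfold conjn, phi'; gsimpl; reflexivity). apply IHn, M_phi', Hx. Qed.
Lemma M_conjp n x : M x -> M (conjp n x).
Proof. revert x; induction n; intros x Hx; unfold conjp; simpl.
  gsimpl. exact Hx.
  replace (Delta ** gpow Delta n ** (x ** ginv (Delta ** gpow Delta n))) with (phi (conjp n x))
   by (unfold conjp, phi; gsimpl; reflexivity). apply M_phi, IHn, Hx. Qed.

Lemma WL l : (forall y, In y l -> simple y \/ simple (ginv y)) ->
  leL M (lprod l) (gpow Delta (length l)).
Proof. induction l as [|y l IH]; intro Hl; simpl. apply leL_refl.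
  unfold leL. 
  replace (ginv (y ** lprod l) ** (Delta ** gpow Delta (length l))) with
    ((ginv (lprod l) ** gpow Delta (length l)) ** conjn (length l) (ginv y ** Delta))
    by (unfold conjn; gsimpl; reflexivity).
  apply Mmul. apply IH. intros; apply Hl; simpl; auto.
  apply M_conjn. destruct (Hl y (or_introl eq_refl)) as [H|H]; apply simple_iff in H.
  apply H. apply Mmul. apply H. apply MD. Qed.

Definition Pn n x := exists l, length l = n /\ (forall y, In y l -> simple y) /\ lprod l = x.

Lemma Pn_le n x : Pn n x -> leL M x (gpow Delta n).
Proof. intros [l [<- [Hl <-]]]. apply WL. intros; left; auto. Qed.

Lemma Kl n : forall w, M w -> leL M w (gpow Delta n) ->
  exists l, length l = n /\ (forall y, In y l -> simple y) /\ w ** lprod l = gpow Delta n.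
Proof. induction n; intros w Mw Hw; simpl in *.
  - exists []. simpl. unfold leL in Hw. rewrite gmul1r in Hw. pose proof (Mpt _ Mw Hw) as E.
    subst w. split; [reflexivity|split; [intros ? []|apply gmul1r]].
  - destruct (lat w Delta) as [_ [j [Hj1 [Hj2 Hj3]]]].
    assert (Mw' : M (ginv Delta ** j)) by exact Hj2.
    assert (Hjw : leL M j (w ** Delta)).
    { apply Hj3; unfold leL. gsimpl. apply MD. apply M_phi', Mw. }
    assert (Hw' : leL M (ginv Delta ** j) (gpow Delta n)).
    { unfold leL. gsimpl. change (leL M j (Delta ** gpow Delta n)). apply Hj3; auto.
      unfold leL. gsimpl. apply Mpow. }
    destruct (IHn _ Mw' Hw') as [l [Hl1 [Hl2 Hl3]]].
    exists (ginv w ** j :: l). simpl. split; [|split].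
    + rewrite Hl1; reflexivity.
    + intros y [<-|Hy]; auto. apply simple_iff. split. exact Hj1.
      revert Hjw. unfold leL. gsimpl. auto.
    + rewrite <- Hl3. gsimpl. reflexivity. Qed.

Lemma K_cor n x : M x -> leL M x (gpow Delta n) -> Pn n x.
Proof. intros Mx Hx.
  assert (Mw : M (gpow Delta n ** ginv x)).
  { replace (gpow Delta n ** ginv x) with (conjp n (ginv x ** gpow Delta n))
      by (unfold conjp; gsimpl; reflexivity). apply M_conjp, Hx. }
  assert (Hw : leL M (gpow Delta n ** ginv x) (gpow Delta n)).
  { unfold leL. gsimpl. exact Mx. }
  destruct (Kl n _ Mw Hw) as [l [H1 [H2 H3]]]. exists l. split; [auto|split; [auto|]].
  rewrite <- (canc1 _ (gpow Delta n ** ginv x) (lprod l)), H3. gsimpl. reflexivity. Qed.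


Lemma lprod_app (l1 l2 : list G) : lprod (l1 ++ l2) = lprod l1 ** lprod l2.
Proof. induction l1; simpl. rewrite gmul1l; reflexivity. rewrite IHl1, gmulA; reflexivity. Qed.

Lemma M_lprod l : (forall y, In y l -> simple y) -> M (lprod l).
Proof. induction l; simpl; intro H. apply M1. apply Mmul. apply H; auto.
  apply IHl; intros; apply H; auto. Qed.

Lemma Fl s Y : simple s -> M Y ->
  (forall u, M u -> leL M u (ginv s ** Delta) -> leL M u Y -> u = gone) ->
  forall u, M u -> leL M u Delta -> leL M u (s ** Y) -> leL M u s.
Proof. intros Hs MY Hc u Mu Hu1 Hu2.
  destruct (lat u s) as [_ [j [Hj1 [Hj2 Hj3]]]].
  assert (HjY : leL M j (s ** Y)). { apply Hj3; auto. unfold leL. gsimpl. exact MY. }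
  assert (HjD : leL M j Delta). { apply Hj3; auto. apply Hs. }
  assert (E : ginv s ** j = gone).
  { apply Hc. exact Hj2.
    revert HjD. unfold leL. gsimpl. auto.
    revert HjY. unfold leL. gsimpl. auto. }
  replace s with j. exact Hj1.
  rewrite <- (canc2 _ s j), E, gmul1r. reflexivity. Qed.

Lemma Gl l : forall t s, (forall y, In y (t :: l) -> simple y) -> simple s ->
  leL M s (lprod (t :: l)) ->
  (forall u, M u -> leL M u Delta -> leL M u (lprod (t :: l)) -> leL M u s) ->
  Pn (length l) (ginv s ** lprod (t :: l)).
Proof. 
  assert (Hts : forall l t s, (forall y, In y (t :: l) -> simple y) ->
    (forall u, M u -> leL M u Delta -> leL M u (lprod (t :: l)) -> leL M u s) -> leL M t s).
  { intros l0 t s Hl Hh. assert (Ht : simple t) by (apply Hl; simpl; auto).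
    apply Hh. apply Ht. apply Ht. simpl. unfold leL. gsimpl. apply M_lprod.
    intros; apply Hl; simpl; auto. }
  induction l as [|t' l IH]; intros t s Hl Hs Hsz Hh; simpl.
  - pose proof (Hts _ _ _ Hl Hh) as Hle. simpl in Hsz. rewrite gmul1r in Hsz |- *.
    rewrite (leL_antisym _ _ Hsz Hle). exists []. simpl. split; [reflexivity|split;[intros ? []|]].
    gsimpl. reflexivity.
  - pose proof (Hts _ _ _ Hl Hh) as Hle.
    set (y := lprod (t' :: l)).
    assert (My : M y) by (apply M_lprod; intros; apply Hl; simpl in *; tauto).
    destruct (lat y Delta) as [[h [Hh1 [Hh2 Hh3]]] _].
    assert (Mh : M h). { apply leL_one. apply Hh3; apply leL_one. exact My. apply MD. }
    assert (Sh : simple h) by (split; assumption).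
    assert (IHh := IH t' h (fun z Hz => Hl z (or_intror Hz)) Sh Hh1 (fun u Mu H1 H2 => Hh3 u H2 H1)).
    assert (Hr' : leL M (ginv t ** s) h).
    { apply Hh3.
      - unfold leL. gsimpl. revert Hsz. simpl. fold y. unfold leL. gsimpl. auto.
      - unfold leL. replace (ginv (ginv t ** s) ** Delta) with ((ginv s ** Delta) ** phi' t)
          by (unfold phi'; gsimpl; reflexivity). apply Mmul. apply Hs. apply M_phi'. apply Hl; simpl; auto. }
    assert (Sr : simple (ginv s ** (t ** h))).
    { apply simple_iff. split.
      - revert Hr'. unfold leL. gsimpl. auto.
      - replace (ginv (ginv s ** (t ** h)) ** Delta) with ((ginv h ** Delta) ** phi' (ginv t ** s))
          by (unfold phi'; gsimpl; reflexivity). apply Mmul. apply Sh. apply M_phi'. exact Hle. }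
    destruct IHh as [l0 [Hl0 [Hl1 Hl2]]].
    exists ((ginv s ** (t ** h)) :: l0). simpl. split; [rewrite Hl0; reflexivity|split].
    + intros z [<-|Hz]; auto.
    + rewrite Hl2. fold y. gsimpl. reflexivity. Qed.

Lemma Pn_map (f : G -> G) : (forall x y, f (x ** y) = f x ** f y) -> f gone = gone ->
  (forall s, simple s -> simple (f s)) -> forall n x, Pn n x -> Pn n (f x).
Proof. intros Hm H1 Hs n x [l [Hl1 [Hl2 Hl3]]]. exists (map f l). split; [|split].
  rewrite length_map; auto.
  intros y Hy. apply in_map_iff in Hy. destruct Hy as [z [<- Hz]]. auto.
  subst. clear Hl2. induction l; simpl. auto. rewrite Hm, IHl; reflexivity. Qed.

Lemma Pn_phi n x : Pn n x -> Pn n (phi x).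
Proof. apply Pn_map. apply phi_mul. apply phi_one. apply simple_phi. Qed.
Lemma Pn_phi' n x : Pn n x -> Pn n (phi' x).
Proof. apply Pn_map. apply phi'_mul. apply phi'_one. apply simple_phi'. Qed.


Definition omega := ginv delta ** Delta.

Lemma Hdiv x : Div M delta x <-> Div M Delta x /\ Defs.Nsub M delta x.
Proof. destruct HP as [_ [_ [H _]]]. apply H. Qed.
Lemma Mdelta : M delta. Proof. destruct HP as [H _]. exact H. Qed.

Lemma Div_delta_self : Div M delta delta.
Proof. split. apply Mdelta. apply leL_refl. Qed.
Lemma delta_simple : simple delta.
Proof. apply (Hdiv delta), Div_delta_self. Qed.
Lemma omega_simple : simple omega.
Proof. apply simple_iff. split. apply delta_simple.
  replace (ginv omega ** Delta) with (phi' delta) by (unfold omega, phi'; gsimpl; reflexivity).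
  apply M_phi', Mdelta. Qed.
Lemma omega_compl : ginv omega ** Delta = phi' delta.
Proof. unfold omega, phi'; gsimpl; reflexivity. Qed.

Lemma Nsub_mul x y : Defs.Nsub M delta x -> Defs.Nsub M delta y -> Defs.Nsub M delta (x ** y).
Proof. intros [l1 [H1 E1]] [l2 [H2 E2]]. exists (l1 ++ l2). split.
  intros z Hz. apply in_app_or in Hz. destruct Hz; auto.
  rewrite lprod_app, E1, E2; reflexivity. Qed.

Lemma disj v : M v -> leL M v delta -> leL M v omega -> v = gone.
Proof. intros Mv H1 H2.
  assert (Nv : Defs.Nsub M delta v) by (apply (Hdiv v); split; auto).
  assert (Nd : Defs.Nsub M delta delta) by (apply (Hdiv delta), Div_delta_self).
  assert (Hdv : Div M delta (delta ** v)).
  { apply Hdiv. split. split. apply Mmul; auto. apply Mdelta.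
    revert H2. unfold leL, omega. gsimpl. auto.
    apply Nsub_mul; auto. }
  destruct Hdv as [_ Hdv]. revert Hdv. unfold leL. gsimpl. intro Hv. apply Mpt; auto. Qed.

Definition Red k c := forall n, Defs.Nsub M delta n -> leL M (conjn k n) c -> conjn k n = gone.

Lemma conjn_S k n : conjn (S k) n = phi' (conjn k n).
Proof. unfold conjn, phi'. simpl. rewrite (gpow_comm _ Delta k). gsimpl. reflexivity. Qed.
Lemma conjn_0 n : conjn 0 n = n.
Proof. unfold conjn. simpl. gsimpl. reflexivity. Qed.

Lemma Red_step k c : Red (S k) c -> Red k (phi c).
Proof. intros H n Hn Hle. apply leL_phi' in Hle. rewrite phi'_phi, <- conjn_S in Hle.
  specialize (H n Hn Hle). rewrite conjn_S in H.
  rewrite <- (phi_phi' (conjn k n)), H, phi_one. reflexivity. Qed.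

Definition D k c := ginv (gpow delta k) ** (gpow Delta k ** c).

Lemma D_S k c : D (S k) c = omega ** phi' (D k (phi c)).
Proof. unfold D, omega, phi', phi. simpl. rewrite (gpow_comm _ delta k), (gpow_comm _ Delta k).
  gsimpl. reflexivity. Qed.
Lemma D_0 c : D 0 c = c.
Proof. unfold D. simpl. gsimpl. reflexivity. Qed.

Lemma M_D k : forall c, M c -> M (D k c).
Proof. induction k; intros c Mc. rewrite D_0; auto.
  rewrite D_S. apply Mmul. apply omega_simple. apply M_phi', IHk, M_phi, Mc. Qed.

Definition Qprop k := forall c, M c -> Red k c ->
  forall v, M v -> leL M v delta -> leL M v (D k c) -> v = gone.

Lemma coprimeY k : Qprop k -> forall c, M c -> Red (S k) c ->
  forall u, M u -> leL M u (ginv omega ** Delta) -> leL M u (phi' (D k (phi c))) -> u = gone.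
Proof. intros Q c Mc Rc u Mu H1 H2. rewrite omega_compl in H1.
  apply leL_phi in H1. apply leL_phi in H2. rewrite phi_phi' in H1, H2.
  assert (E := Q (phi c) (M_phi _ Mc) (Red_step _ _ Rc) (phi u) (M_phi _ Mu) H1 H2).
  rewrite <- (phi'_phi u), E, phi'_one. reflexivity. Qed.

Lemma headw k c : Qprop k -> M c -> Red (S k) c ->
  forall u, M u -> leL M u Delta -> leL M u (D (S k) c) -> leL M u omega.
Proof. intros Q Mc Rc. rewrite D_S. apply Fl. apply omega_simple.
  apply M_phi', M_D, M_phi, Mc. apply (coprimeY k Q c Mc Rc). Qed.

Lemma Qall k : Qprop k.
Proof. induction k; intros c Mc Rc v Mv H1 H2.
  - rewrite D_0 in H2. rewrite <- (conjn_0 v) in H2 |- *. apply Rc; auto.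
    apply (Hdiv v). split; auto.
  - apply disj; auto. apply (headw k c IHk Mc Rc v Mv); auto.
    apply leL_trans with delta; auto. apply delta_simple. Qed.

Lemma Main (Hw : omega <> gone) k : forall c, M c -> Red k c ->
  forall L, Pn L (D k c) -> k <= L /\ Pn (L - k) c.
Proof. induction k; intros c Mc Rc L HL.
  - rewrite D_0 in HL. rewrite Nat.sub_0_r. split; [lia|exact HL].
  - pose proof HL as [l [Hl1 [Hl2 Hl3]]].
    destruct l as [|t l].
    + exfalso. apply Hw. simpl in Hl3. rewrite D_S in Hl3. apply Mpt. apply omega_simple.
      rewrite (inv_uniq _ _ _ (eq_sym Hl3)). apply M_phi', M_D, M_phi, Mc.
    + assert (HG' := Gl l t omega Hl2 omega_simple).
      rewrite Hl3 in HG'.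
      assert (HG2 : Pn (length l) (phi' (D k (phi c)))).
      { replace (phi' (D k (phi c))) with (ginv omega ** D (S k) c)
          by (rewrite D_S; gsimpl; reflexivity).
        apply HG'. rewrite D_S. unfold leL. gsimpl. apply M_phi', M_D, M_phi, Mc.
        apply headw; auto. apply Qall. }
      apply Pn_phi in HG2. rewrite phi_phi' in HG2.
      destruct (IHk (phi c) (M_phi _ Mc) (Red_step _ _ Rc) _ HG2) as [H1 H2].
      simpl in Hl1. subst L. split. lia. simpl.
      apply Pn_phi' in H2. rewrite phi'_phi in H2. exact H2. Qed.


Lemma filt l : (forall y, In y l -> simple y \/ simple (ginv y)) ->
  exists l', (forall y, In y l' -> Sgen M Delta y \/ Sgen M Delta (ginv y)) /\
    lprod l' = lprod l /\ length l' <= length l.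
Proof. induction l as [|y l IH]; intro H.
  - exists []. simpl. split; [intros ? []|split; auto].
  - destruct IH as [l' [H1 [H2 H3]]]. intros; apply H; simpl; auto.
    destruct (classic (y = gone)) as [E|E].
    + exists l'. simpl. rewrite E, gmul1l. split; auto.
    + exists (y :: l'). simpl. split; [|split; [rewrite H2; reflexivity|lia]].
      intros z [<-|Hz]; auto.
      assert (E' : ginv y <> gone).
      { intro E2. apply E. rewrite <- (ginv_ginv _ y), E2, ginv_one. reflexivity. }
      destruct (H y (or_introl eq_refl)); [left|right]; split; auto. Qed.

Lemma word_ex g : exists n, word_of_len M Delta g n.
Proof. destruct (Ggen g) as [l [Hl E]]. destruct (filt l Hl) as [l' [H1 [H2 _]]].
  exists (length l'). exists l'. split; auto. split; auto. rewrite H2; auto. Qed.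

Lemma lg_spec g : is_lg M Delta g (lg M Delta g).
Proof. unfold lg. apply epsilon_spec.
  destruct (word_ex g) as [n Hn]. revert Hn. induction n as [n IH] using lt_wf_ind. intro Hn.
  destruct (classic (forall m, word_of_len M Delta g m -> n <= m)) as [H|H].
  - exists n. split; auto.
  - apply not_all_ex_not in H. destruct H as [m Hm]. apply imply_to_and in Hm.
    destruct Hm as [Hm1 Hm2]. apply (IH m); auto. lia. Qed.

Lemma lg_le g n : word_of_len M Delta g n -> lg M Delta g <= n.
Proof. apply lg_spec. Qed.
Lemma lg_word g : word_of_len M Delta g (lg M Delta g).
Proof. apply lg_spec. Qed.

Lemma simple_conjn i x : simple x -> simple (conjn i x).
Proof. rewrite !simple_iff. intros [H1 H2]. split. apply M_conjn, H1.
  replace (ginv (conjn i x) ** Delta) with (conjn i (ginv x ** Delta)).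
  apply M_conjn, H2. unfold conjn. gsimpl. rewrite (gpow_comm _ Delta i). reflexivity. Qed.

Lemma conjn_one i x : conjn i x = gone -> x = gone.
Proof. intro H. replace x with (gpow Delta i ** (conjn i x ** ginv (gpow Delta i)))
  by (unfold conjn; gsimpl; reflexivity). rewrite H. gsimpl. reflexivity. Qed.

Lemma zpow_neg k : zpow Delta (- Z.of_nat k) = ginv (gpow Delta k).
Proof. destruct k; simpl. rewrite ginv_one; reflexivity.
  rewrite SuccNat2Pos.id_succ. reflexivity. Qed.

Lemma PhiZ_conjn k x : PhiZ Delta (- Z.of_nat k) x = conjn k x.
Proof. unfold PhiZ, conjn. rewrite zpow_neg, ginv_ginv. reflexivity. Qed.

Lemma omega_prod_eq k : omega_prod Delta omega k = ginv (gpow delta k) ** gpow Delta k.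
Proof. induction k; simpl. gsimpl. reflexivity.
  rewrite IHk, PhiZ_conjn. unfold conjn, omega.
  gsimpl. reflexivity. Qed.

Lemma omega_prod_word (Hw : omega <> gone) k : word_of_len M Delta (omega_prod Delta omega k) k.
Proof. induction k; simpl.
  - exists []. simpl. split; [intros ? []|auto].
  - destruct IHk as [l [H1 [H2 H3]]]. exists (l ++ [PhiZ Delta (- Z.of_nat k) omega]).
    split; [|split].
    + intros y Hy. apply in_app_or in Hy. destruct Hy as [Hy|[<-|[]]]; auto. left.
      rewrite PhiZ_conjn. split. apply simple_conjn, omega_simple.
      intro E. apply Hw. apply (conjn_one k), E.
    + rewrite lprod_app, H2. simpl. rewrite gmul1r. reflexivity.
    + rewrite length_app, H3. simpl. lia. Qed.

End Main.

Theorem lemma5p7 (G : Group) (M : G -> Prop) (Delta delta : G)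
  (HG : GarsideStructure M Delta) (HP : ParabolicSub M Delta delta)
  (k : nat) (c : G) (Mc : M c)
  (Hnle : ~ leL M (PhiZ Delta (- Z.of_nat k) (gmul (ginv delta) Delta)) c)
  (Hred : reduced M Delta delta (- Z.of_nat k) c)
  (Ma : M (gmul (omega_prod Delta (gmul (ginv delta) Delta) k) c)) :
  lg M Delta (gmul (omega_prod Delta (gmul (ginv delta) Delta) k) c)
  = (lg M Delta c + k)%nat.
Proof.
  change (gmul (ginv delta) Delta) with (omega G Delta delta) in *.
  assert (Hw : omega G Delta delta <> gone).
  { intro E. apply Hnle. rewrite E. unfold PhiZ. gsimpl. apply (leL_one G M); auto. }
  assert (Rc : Red G M Delta delta k c).
  { intros n Hn Hle. rewrite <- PhiZ_conjn in Hle |- *. apply Hred; eauto. }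
  apply Nat.le_antisymm.
  - destruct (lg_word G M Delta HG c) as [lc [Hc1 [Hc2 Hc3]]].
    destruct (omega_prod_word G M Delta delta HG HP Hw k) as [lo [Ho1 [Ho2 Ho3]]].
    replace (lg M Delta c + k) with (length (lo ++ lc)) by (rewrite length_app; lia).
    apply (lg_le G M Delta HG). exists (lo ++ lc). split; [|split; auto].
    intros y Hy. apply in_app_or in Hy. destruct Hy; auto.
    rewrite (lprod_app G), Ho2, Hc2. reflexivity.
  - destruct (lg_word G M Delta HG (gmul (omega_prod Delta (omega G Delta delta) k) c)) as [l [H1 [H2 H3]]].
    set (L := lg M Delta (gmul (omega_prod Delta (omega G Delta delta) k) c)) in *.
    assert (HL : leL M (gmul (omega_prod Delta (omega G Delta delta) k) c) (gpow Delta L)).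
    { rewrite <- H2, <- H3. apply (WL G M Delta HG). intros y Hy. destruct (H1 y Hy) as [[A _]|[A _]]; auto. }
    apply (K_cor G M Delta HG) in HL; auto.
    rewrite omega_prod_eq, gmulA' in HL.
    destruct (Main G M Delta delta HG HP Hw k c Mc Rc L HL) as [A [l' [B1 [B2 B3]]]].
    destruct (filt G M Delta l') as [l'' [C1 [C2 C3]]]. intros; left; auto.
    assert (lg M Delta c <= length l'').
    { apply (lg_le G M Delta HG). exists l''. split; auto. split; auto. rewrite C2; auto. }
    lia.
Qed.
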